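(* Let $\mathsf{K}$ be a free simplicial $\mathbb{Z}_2$-complex and let $\lambda_1,\ldots,\lambda_m$ be Fan labelings of $\mathsf{K}$. For any choice of non-negative integers $d_1,\ldots,d_m$ with $d_1+\cdots+d_m=\operatorname{ind}(\mathsf{K})$, there exists a simplex $\sigma$ of $\mathsf{K}$ which, for each $i\in[m]$, has a $d_i$-dimensional face that is alternating with respect to $\lambda_i$.
   Context: A free simplicial $\mathbb{Z}_2$-complex is a simplicial complex with a free simplicial $\mathbb{Z}_2$-action (an involution without fixed points on its geometric realization). A Fan labeling is a labeling of its vertices by non-zero integers such that (i) no two adjacent vertices have labels summing to zero, and (ii) the two vertices of any orbit of the action have labels summing to zero. A simplex is alternating with respect to a labeling if the signs of the labels alternate when its vertices are ordered by increasing absolute value of their labels (in particular the labels have distinct absolute values). The $\mathbb{Z}_2$-index $\operatorname{ind}(\mathsf{K})$ is the minimal $d$ such that there exists a continuous map from (the geometric realization of) $\mathsf{K}$ to the sphere $\mathcal{S}^d$ commuting with the $\mathbb{Z}_2$-actions, the action on $\mathcal{S}^d$ being the antipodal map. *)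

(* Defs.v *)
From HB Require Import structures.
From mathcomp Require Import all_boot all_order all_algebra.
From mathcomp Require Import all_classical all_reals all_analysis.
Set Implicit Arguments. Unset Strict Implicit. Unset Printing Implicit Defensive.
Import Order.TTheory GRing.Theory Num.Theory.
Import numFieldNormedType.Exports.

Local Open Scope ring_scope.

Definition simplicial_complex (n : nat) (K : {set {set 'I_n}}) : Prop :=
  [/\ finset.set0 \notin K,
      (forall v : 'I_n, [set v] \in K) &
      (forall s t : {set 'I_n}, s \in K -> t \subset s -> t != finset.set0 -> t \in K)].

(* Geometric realization |K|, in barycentric coordinates inside R^n. *)
Definition realization (R : realType) (n : nat) (K : {set {set 'I_n}})
  : set 'rV[R]_n :=
  fun x => (forall i, 0 <= x ord0 i) /\ (\sum_i x ord0 i = 1) /\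
           [set i | x ord0 i != 0] \in K.
Arguments realization R {n} K.

(* The affine extension of the vertex map nu to |K|. *)
Definition real_act (R : realType) (n : nat) (nu : 'I_n -> 'I_n)
  (x : 'rV[R]_n) : 'rV[R]_n := \row_i x ord0 (nu i).

Definition free_simplicial_Z2_action (R : realType) (n : nat)
  (K : {set {set 'I_n}}) (nu : 'I_n -> 'I_n) : Prop :=
  [/\ (forall v, nu (nu v) = v),
      (forall s, s \in K -> nu @: s \in K) &
      (forall x : 'rV[R]_n,
          realization R K x -> real_act nu x != x)].

Definition sphere (R : realType) (d : nat) : set 'rV[R]_(d.+1) :=
  fun y => \sum_i y ord0 i ^+ 2 = 1.
Arguments sphere : clear implicits.

Definition equiv_map_to_sphere (R : realType) (n : nat)
  (K : {set {set 'I_n}}) (nu : 'I_n -> 'I_n) (d : nat) : Prop :=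
  exists f : 'rV[R]_n -> 'rV[R]_(d.+1),
    [/\ ({within realization R K, continuous f})%classic,
        (forall x, realization R K x -> sphere R d (f x)) &
        (forall x, realization R K x -> f (real_act nu x) = - f x)].

Definition Z2_index (R : realType) (n : nat) (K : {set {set 'I_n}})
  (nu : 'I_n -> 'I_n) (k : nat) : Prop :=
  equiv_map_to_sphere R K nu k /\
  (forall d, equiv_map_to_sphere R K nu d -> (k <= d)%N).

Definition fan_labeling (n : nat) (K : {set {set 'I_n}}) (nu : 'I_n -> 'I_n)
  (lam : 'I_n -> int) : Prop :=
  [/\ (forall v, lam v != 0),
      (forall u v, u != v -> [set u; v] \in K -> lam u + lam v != 0) &
      (forall v, lam v + lam (nu v) = 0)].

Definition alternating_face (n : nat) (lam : 'I_n -> int) (tau : {set 'I_n}) : Prop :=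
  exists s : seq 'I_n,
    [/\ perm_eq s (enum tau),
        sorted (fun u v => `|lam u| < `|lam v|) s &
        sorted (fun u v => (lam u < 0) != (lam v < 0)) s].

(* Main.v *)
Require Import Defs.
From HB Require Import structures.
From mathcomp Require Import all_boot all_order all_algebra.
From mathcomp Require Import all_classical all_reals all_analysis.
From mathcomp Require Import zify ring lra.
Set Implicit Arguments. Unset Strict Implicit. Unset Printing Implicit Defensive.
Import Order.TTheory GRing.Theory Num.Theory.
Import numFieldNormedType.Exports.
Local Open Scope ring_scope.
Lemma same_sign_pos (a b : int) : a != 0 -> b != 0 -> (a < 0) = (b < 0) -> 0 < a * b.
Proof. move=> ha hb; case: (ltrgt0P a); case: (ltrgt0P b) => //= *; nia. Qed.

Lemma diff_sign_neg (a b : int) : a != 0 -> b != 0 -> (a < 0) != (b < 0) -> a * b < 0.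
Proof. move=> ha hb; case: (ltrgt0P a); case: (ltrgt0P b) => //= *; nia. Qed.

Lemma exists_max n (T : {set 'I_n}) (f : 'I_n -> int) : T != finset.set0 ->
  exists2 v, v \in T & forall u, u \in T -> f u <= f v.
Proof.
case/set0Pn => v0 hv0.
case: (@arg_maxP _ _ _ v0 (mem T) f hv0) => v hv hmax.
by exists v.
Qed.

Definition altchain n (lam : 'I_n -> int) (T : {set 'I_n}) (L : nat) :=
  exists s : seq 'I_n, [/\ all (mem T) s, size s = L,
    sorted (fun u v => `|lam u| < `|lam v|) s &
    sorted (fun u v => (lam u < 0) != (lam v < 0)) s].

Lemma sorted_rcons_last (T : Type) (r : rel T) h t z :
  sorted r (h :: t) -> r (last h t) z -> sorted r (rcons (h :: t) z).
Proof. by rewrite /= rcons_path => -> ->. Qed.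

Lemma poly_sep (R : realFieldType) n (lam : 'I_n -> int) d (T : {set 'I_n}) :
  (forall v, v \in T -> lam v != 0) ->
  (forall u v, u \in T -> v \in T -> `|lam u| = `|lam v| -> (lam u < 0) = (lam v < 0)) ->
  T != finset.set0 -> (altchain lam T d.+1 -> False) ->
  exists P : {poly R}, [/\ (size P <= d)%N,
    (forall v, v \in T -> 0 < (lam v)%:~R * P.[(`|lam v|)%:~R]) &
    (forall v, v \in T -> (forall u, u \in T -> `|lam u| <= `|lam v|) ->
       forall t : R, (`|lam v|)%:~R <= t -> 0 < (lam v)%:~R * P.[t])].
Proof.
elim: d T => [|d IH] T hnz hcons hne hna.
  exfalso; case/set0Pn: hne => v hv; apply: hna; exists [:: v]; split => //=.
  by rewrite hv.
have [vs hvs hvsmax] := exists_max (fun u => `|lam u|) hne.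
set T2 := [set w in T | (lam w < 0) != (lam vs < 0)].
have [T20|T2n0] := eqVneq T2 finset.set0.
  exists ((lam vs)%:~R)%:P; split.
  - by rewrite size_polyC; case: (_ != 0).
  - move=> v hv; rewrite hornerC -intrM ltr0z; apply: same_sign_pos; rewrite ?hnz //.
    apply/eqP/negbNE/negP => hd.
    have : v \in T2 by rewrite inE hv hd.
    by rewrite T20 inE.
  - move=> v hv _ t _; rewrite hornerC -intrM ltr0z; apply: same_sign_pos; rewrite ?hnz //.
    apply/eqP/negbNE/negP => hd.
    have : v \in T2 by rewrite inE hv hd.
    by rewrite T20 inE.
have [ws hws hwsmax] := exists_max (fun u => `|lam u|) T2n0.
move: hws; rewrite inE => /andP [hwsT hwsd].
have hwsmax' : forall u, u \in T -> (lam u < 0) != (lam vs < 0) -> `|lam u| <= `|lam ws|.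
  by move=> u hu hd; apply: hwsmax; rewrite inE hu hd.
have hws_lt : `|lam ws| < `|lam vs|.
  rewrite lt_neqAle hvsmax // andbT; apply/eqP => he.
  by move: hwsd; rewrite (hcons _ _ hwsT hvs he) eqxx.
set T' := [set u in T | `|lam u| <= `|lam ws|].
have hT'T : forall u, u \in T' -> u \in T by move=> u; rewrite inE => /andP [].
have hwsT' : ws \in T' by rewrite inE hwsT lexx.
have [P' [hsz hpos htop]] : exists P : {poly R}, [/\ (size P <= d)%N,
    (forall v, v \in T' -> 0 < (lam v)%:~R * P.[(`|lam v|)%:~R]) &
    (forall v, v \in T' -> (forall u, u \in T' -> `|lam u| <= `|lam v|) ->
       forall t : R, (`|lam v|)%:~R <= t -> 0 < (lam v)%:~R * P.[t])].
  apply: IH.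
  - by move=> v /hT'T; apply: hnz.
  - by move=> u v /hT'T hu /hT'T hv; apply: hcons.
  - by apply/set0Pn; exists ws.
  case=> s [hall hsz hs1 hs2].
  case: s hsz hall hs1 hs2 => // h t hsz hall hs1 hs2.
  set l := last h t.
  have hl : l \in T'.
    by move/allP: hall; apply; rewrite /l mem_last.
  have hlT := hT'T _ hl.
  have hlle : `|lam l| <= `|lam ws| by move: hl; rewrite inE => /andP [].
  have hallT : all (mem T) (h :: t).
    by apply/allP => x /(allP hall) /hT'T.
  apply: hna.
  case hsl : ((lam l < 0) == (lam vs < 0)).
  - exists (rcons (h :: t) ws); split.
    + rewrite all_rcons; apply/andP; split =>//.
    + by rewrite size_rcons hsz.
    + apply: sorted_rcons_last => //; rewrite lt_neqAle hlle andbT.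
      apply/eqP => he; move: hwsd; rewrite -(hcons _ _ hlT hwsT he).
      by rewrite (eqP hsl) eqxx.
    + apply: sorted_rcons_last => //; rewrite (eqP hsl).
      by move: hwsd; case: (lam ws < 0); case: (lam vs < 0).
  - exists (rcons (h :: t) vs); split.
    + rewrite all_rcons; apply/andP; split =>//.
    + by rewrite size_rcons hsz.
    + by apply: sorted_rcons_last => //; exact: le_lt_trans hlle hws_lt.
    + by apply: sorted_rcons_last => //; rewrite hsl.
set c : R := (`|lam ws|)%:~R + 2^-1.
have hwstop : forall t : R, (`|lam ws|)%:~R <= t -> 0 < (lam ws)%:~R * P'.[t].
  by apply: htop => // u; rewrite inE => /andP [].

have H : forall v, v \in T -> (lam v < 0) = (lam vs < 0) ->
    forall t : R, (`|lam ws|)%:~R + 1 <= t -> 0 < (lam v)%:~R * (P' * (c%:P - 'X)).[t].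
  move=> v hv hsv t ht.
  have h1 : 0 < (lam ws)%:~R * P'.[t] :> R by apply: hwstop; lra.
  have h2 : (lam v)%:~R * (lam ws)%:~R < 0 :> R.
    rewrite -intrM ltrz0; apply: diff_sign_neg; rewrite ?hnz //.
    by rewrite hsv eq_sym.
  have h3 : c - t < 0 by rewrite /c; lra.
  rewrite hornerM hornerD hornerN hornerC hornerX.
  set lv : R := (lam v)%:~R in h2 *; set lw : R := (lam ws)%:~R in h1 h2.
  set p := P'.[t] in h1 *.
  have hvp : lv * p < 0.
    case: (ltrgt0P lw) => hlw.
    - move: h1 h2; rewrite (pmulr_rgt0 _ hlw) (pmulr_llt0 _ hlw) => h1 h2.
      by rewrite (nmulr_rlt0 _ h2).
    - move: h1 h2; rewrite (nmulr_rgt0 _ hlw) (nmulr_llt0 _ hlw) => h1 h2.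
      by rewrite (pmulr_rlt0 _ h2).
    - by move: h1; rewrite hlw mul0r ltxx.
  by rewrite mulrA (nmulr_rgt0 _ hvp).
exists (P' * (c%:P - 'X)); split.
- apply: leq_trans (size_mul_leq _ _) _.
  rewrite -opprB size_opp size_XsubC addn2 /=; done.
- move=> v hv.
  case: (lerP `|lam v| `|lam ws|) => hle.
  + have hvT' : v \in T' by rewrite inE hv hle.
    have := hpos v hvT'.
    have : (`|lam v|)%:~R < c :> R.
      rewrite /c; have : (`|lam v|)%:~R <= (`|lam ws|)%:~R :> R by rewrite ler_int.
      lra.
    rewrite hornerM hornerD hornerN hornerC hornerX => hc hp.
    by rewrite mulrA mulr_gt0 // subr_gt0.
  + apply: H => //.
      apply/eqP/negbNE/negP => hd.
      by move: (hwsmax' v hv hd); rewrite leNgt hle.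
    have : (`|lam ws| + 1) <= `|lam v| by rewrite lezD1.
    by rewrite -(ler_int R) intrD.
- move=> v hv hvmax t ht.
  have he : `|lam v| = `|lam vs|.
    by apply/eqP; rewrite eq_le hvsmax // hvmax.
  apply: H => //; first exact: hcons.
  have : (`|lam ws| + 1) <= `|lam v| by rewrite lezD1 he.
  rewrite -(ler_int R) intrD => h; lra.
Qed.
Lemma mk_map (R : realType) n (K : {set {set 'I_n}}) (nu : 'I_n -> 'I_n) k
  (W : 'I_n -> 'rV[R]_k.+1) :
  (forall v, nu (nu v) = v) -> (forall v, W (nu v) = - W v) ->
  (forall x, realization R K x -> \sum_v x ord0 v *: W v != 0) ->
  equiv_map_to_sphere R K nu k.
Proof.
move=> hnu hW hnz.
pose F (x : 'rV[R]_n) : 'rV[R]_k.+1 := \sum_v x ord0 v *: W v.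
pose S (y : 'rV[R]_k.+1) : R := \sum_j y ord0 j ^+ 2.
pose N (y : 'rV[R]_k.+1) : R := Num.sqrt (S y).
have hS0 : forall y, 0 <= S y by move=> y; apply: sumr_ge0 => j _; exact: sqr_ge0.
have hSpos : forall y, y != 0 -> 0 < S y.
  move=> y hy; rewrite lt_neqAle hS0 andbT; apply/eqP => h.
  move/eqP: hy; apply; apply/matrixP => i j; rewrite !mxE (ord1 i).
  have := @psumr_eq0P R _ xpredT (fun j => y ord0 j ^+ 2) (fun j _ => sqr_ge0 (y ord0 j)) (esym h) j isT.
  by move/eqP; rewrite sqrf_eq0 => /eqP.
have hNpos : forall y, y != 0 -> 0 < N y by move=> y hy; rewrite sqrtr_gt0 hSpos.
exists (fun x => (N (F x))^-1 *: F x); split.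
- apply: continuous_in_subspaceT => x hx.
  have hF : continuous F.
    move=> z; rewrite /F.
    have : forall r : seq 'I_n,
        {for z, continuous (fun x : 'rV[R]_n => \sum_(v <- r) x ord0 v *: W v)}.
      elim => [|a r IH].
        rewrite (_ : (fun x : 'rV[R]_n => _) = fun _ => 0); last first.
          by apply: funext => w; rewrite big_nil.
        exact: cst_continuous.
      rewrite (_ : (fun x : 'rV[R]_n => _) = (fun x => x ord0 a *: W a) + (fun x => \sum_(v <- r) x ord0 v *: W v)); last first.
        by apply: funext => w; rewrite big_cons.
      apply: continuousD => //.
      apply: continuousZr_tmp; exact: coord_continuous.
    by apply.
  have hS : continuous S.
    move=> z; rewrite /S.
    have : forall r : seq 'I_k.+1,
        {for z, continuous (fun y : 'rV[R]_k.+1 => \sum_(j <- r) y ord0 j ^+ 2)}.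
      elim => [|a r IH].
        rewrite (_ : (fun y : 'rV[R]_k.+1 => _) = fun _ => 0); last first.
          by apply: funext => w; rewrite big_nil.
        exact: cst_continuous.
      rewrite (_ : (fun y : 'rV[R]_k.+1 => _) = (fun y => y ord0 a * y ord0 a) + (fun y => \sum_(j <- r) y ord0 j ^+ 2)); last first.
        by apply: funext => w; rewrite big_cons.
      apply: continuousD => //.
      by apply: continuousM; exact: coord_continuous.
    by apply.
  have hN : continuous N.
    by move=> y; apply: continuous_comp; [exact: hS | exact: sqrt_continuous].
  have hNF : {for x, continuous (N \o F)}.
    by apply: continuous_comp; [exact: hF | exact: hN].
  apply: (@continuousZ R _ _ (fun z => (N (F z))^-1) F x); last exact: hF.
  apply: continuousV; last exact: hNF.
  have hx' : realization R K x by move: hx; rewrite inE.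
  by rewrite gt_eqF // hNpos // hnz.
- move=> x hx; rewrite /sphere.
  have hy := hnz x hx; set y := F x in hy *.
  under eq_bigr do rewrite mxE exprMn.
  rewrite -mulr_sumr -/(S y) exprVn sqr_sqrtr // mulVf //.
  by rewrite gt_eqF // hSpos.
- move=> x hx.
  have -> : F (real_act nu x) = - F x.
    rewrite /F -sumrN (reindex_inj (can_inj hnu)) /=.
    by apply: eq_bigr => v _; rewrite /real_act mxE hnu hW scalerN.
  have -> : N (- F x) = N (F x).
    rewrite /N /S; congr Num.sqrt; apply: eq_bigr => j _.
    by rewrite mxE sqrrN.
  by rewrite scalerN.
Qed.
Lemma abs_cons (a b : int) : `|a| = `|b| -> a + b != 0 -> (a < 0) = (b < 0).
Proof.
case: (ltrgt0P a) => ha; case: (ltrgt0P b) => hb;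
  rewrite ?(ltr0_norm ha) ?(gtr0_norm ha) ?(ltr0_norm hb) ?(gtr0_norm hb) ?ha ?hb ?normr0;
  move=> h1 h2 //=; lia.
Qed.
Unset Implicit Arguments.
Theorem theorem3p1 (R : realType) (n : nat) (K : {set {set 'I_n}})
  (nu : 'I_n -> 'I_n) (m : nat) (lam : 'I_m -> 'I_n -> int)
  (d : 'I_m -> nat) (k : nat) :
  (0 < n)%N ->
  simplicial_complex K ->
  free_simplicial_Z2_action R K nu ->
  (forall i, fan_labeling K nu (lam i)) ->
  Z2_index R K nu k ->
  (\sum_(i < m) d i)%N = k ->
  exists2 sigma, sigma \in K &
    forall i : 'I_m, exists2 tau : {set 'I_n},
      tau \subset sigma & (#|tau| = (d i).+1)%N /\ alternating_face (lam i) tau.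
Proof.
move=> hn [hK0 hK1 hK2] [hnu hnuK hfix] hfan [hmap hmin] hsum.
case: k hsum hmap hmin => [|k] hsum hmap hmin.
  have hd0 : forall i, d i = 0%N.
    by move=> i; move/eqP: hsum; rewrite sum_nat_eq0 => /forallP /(_ i) /= /eqP.
  pose v := Ordinal hn.
  exists [set v]; first exact: hK1.
  move=> i; exists [set v] => //; split; first by rewrite cards1 hd0.
  by exists [:: v]; split => //; rewrite enum_set1.
apply: contrapT => hno.
pose T_idx := {i : 'I_m & 'I_(d i)}.
have hcard : #|{: T_idx}| = k.+1.
  rewrite card_tagged -hsum sumnE big_map big_enum /=.
  by apply: eq_bigr => i _; rewrite card_ord.
pose idx (j : 'I_k.+1) : T_idx := enum_val (cast_ord (esym hcard) j).
pose W (v : 'I_n) : 'rV[R]_k.+1 := \row_j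
   ((lam (tag (idx j)) v)%:~R * ((`|lam (tag (idx j)) v|)%:~R ^+ tagged (idx j))).
have hW : forall v, W (nu v) = - W v.
  move=> v; apply/matrixP => a j; rewrite !mxE.
  case: (hfan (tag (idx j))) => _ _ /(_ v) h.
  have -> : lam (tag (idx j)) (nu v) = - lam (tag (idx j)) v.
    by apply/eqP; rewrite -addr_eq0 addrC h.
  by rewrite normrN intrN mulNr.
have hcoord : forall (x : 'rV[R]_n) i (p : 'I_(d i)),
    (\sum_v x ord0 v *: W v) ord0 (cast_ord hcard (enum_rank (Tagged (fun i => 'I_(d i)) p)))
    = \sum_v x ord0 v * ((lam i v)%:~R * ((`|lam i v|)%:~R ^+ p)).
  move=> x i p; rewrite summxE; apply: eq_bigr => v _.
  by rewrite !mxE /idx cast_ordK enum_rankK.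
suff hnz : forall x, realization R K x -> \sum_v x ord0 v *: W v != 0.
  by have := hmin k (mk_map hnu hW hnz); rewrite ltnn.
move=> x [hx0 [hx1 hxK]].
set sg := [set i | x ord0 i != 0] in hxK.
have [i hi] : exists i, ~ (exists2 tau : {set 'I_n}, tau \subset sg &
     (#|tau| = (d i).+1)%N /\ alternating_face (lam i) tau).
  apply: contrapT => h; apply: hno; exists sg => // i'.
  by apply: contrapT => h'; apply: h; exists i'.
have hna : altchain (lam i) sg (d i).+1 -> False.
  case=> s [hall hsz hs1 hs2]; apply: hi; exists [set u in s].
    by apply/fintype.subsetP => u; rewrite inE => /(allP hall).
  have hu : uniq s.
    apply: (sorted_uniq _ _ hs1).
      by move=> a b c; apply: lt_trans.
    by move=> a; rewrite ltxx.
  split; first by rewrite cardsE (card_uniqP hu) hsz.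
  exists s; split => //.
  apply: uniq_perm => //; first exact: enum_uniq.
  by move=> u; rewrite mem_enum inE.
have hsg0 : sg != finset.set0.
  apply/negP => /eqP h0.
  have : \sum_j x ord0 j = 0.
    apply: big1 => j _; apply/eqP; apply: contraT => hj.
    have : j \in sg by rewrite inE.
    by rewrite h0 inE.
  by rewrite hx1 => /eqP; rewrite oner_eq0.
case: (hfan i) => hl0 hladj hlnu.
have hnz0 : forall v, v \in sg -> lam i v != 0 by move=> v _; exact: hl0.
have hcons : forall u v, u \in sg -> v \in sg -> `|lam i u| = `|lam i v| ->
    (lam i u < 0) = (lam i v < 0).
  move=> u v hu hv he; case: (eqVneq u v) => [->//|huv].
  apply: abs_cons => //; apply: hladj => //.
  apply: (hK2 sg) => //.
    by apply/fintype.subsetP => w; rewrite in_set2 => /orP [] /eqP ->.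
  by apply/set0Pn; exists u; rewrite !inE eqxx.
have [P [hPsz hPpos _]] := @poly_sep R n (lam i) (d i) sg hnz0 hcons hsg0 hna.
apply/negP => /eqP hF0.
have hcoef : forall p : 'I_(d i),
    \sum_v x ord0 v * ((lam i v)%:~R * ((`|lam i v|)%:~R ^+ p)) = 0.
  by move=> p; rewrite -hcoord hF0 mxE.
have hzero : \sum_v x ord0 v * ((lam i v)%:~R * P.[(`|lam i v|)%:~R]) = 0.
  under eq_bigr do rewrite (horner_coef_wide _ hPsz) mulr_sumr mulr_sumr.
  rewrite exchange_big /=; apply: big1 => p _.
  rewrite (_ : \sum_v _ = P`_p * \sum_v x ord0 v * ((lam i v)%:~R * ((`|lam i v|)%:~R ^+ p))).
    by rewrite hcoef mulr0.
  rewrite mulr_sumr; apply: eq_bigr => v _; ring.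
have [v0 hv0] := set0Pn _ hsg0.
have hterm : forall v, v \in sg -> 0 < x ord0 v * ((lam i v)%:~R * P.[(`|lam i v|)%:~R]).
  move=> v hv; apply: mulr_gt0; last exact: hPpos.
  by rewrite lt_neqAle eq_sym hx0 andbT; move: hv; rewrite inE.
have hrest : 0 <= \sum_(v | v != v0) x ord0 v * ((lam i v)%:~R * P.[(`|lam i v|)%:~R]).
  apply: sumr_ge0 => v _.
  case hv : (v \in sg); first exact/ltW/hterm.
  move: hv; rewrite inE => /negbFE /eqP ->; by rewrite mul0r.
move: hzero; rewrite (bigD1 v0) //=.
have := hterm v0 hv0; lra.
Qed.
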